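(* Let $X$ be a Hausdorff topological space and let $f:X\to X$ be a continuous weak topological contraction. Then $f$ has a unique fixed point.
   Context: A mapping $f:X\to X$ (not necessarily continuous or closed) is a weak topological contraction if for every open cover $\mathcal{U}$ of $X$ and every pair of points $x,y\in X$ there exist $n\in\mathbb{N}_0=\{0,1,2,\dots\}$ and $U\in\mathcal{U}$ such that $f^n[\{x,y\}]\subseteq U$, where $f^n$ is the $n$-fold iterate of $f$ and $f^0$ is the identity. *)

(* Defs.v *)
From HB Require Import structures.
From mathcomp Require Import all_boot all_order.
From mathcomp Require Import all_classical all_reals topology.
Set Implicit Arguments. Unset Strict Implicit. Unset Printing Implicit Defensive.
Local Open Scope classical_set_scope.

Definition open_cover {X : topologicalType} (U : set (set X)) : Prop :=
  (forall A, U A -> open A) /\ \bigcup_(A in U) A = [set: X].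

Definition weak_top_contraction {X : topologicalType} (f : X -> X) : Prop :=
  forall U : set (set X), open_cover U ->
  forall x y : X, exists n : nat, exists2 A, U A & (iter n f) @` [set x; y] `<=` A.

(* Main.v *)
Require Import Defs.
From mathcomp Require Import all_boot all_order.
From mathcomp Require Import all_classical all_reals topology.
Local Open Scope classical_set_scope.

Lemma sep_helper (X : topologicalType) (x y : X) (hX : hausdorff_space X) :
  x <> y -> exists U V : set X, [/\ open U, open V, U x, V y &
     forall z, U z -> V z -> False].
Proof.
move=> nxy; move: hX; rewrite open_hausdorff => /(_ x y).
have nxy' : x != y by apply/eqP.
move=> /(_ nxy') [[U V]] /=; rewrite !inE => -[xU yV] [oU oV UV]; move/eqP: UV => UV.
exists U, V; split => // z Uz Vz.
have : (U `&` V) z by [].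
by rewrite (eqP UV).
Qed.

Arguments sep_helper {X x y}.

Theorem theorem2 (X : topologicalType) (hX : hausdorff_space X)
  (hne : exists x : X, True) (f : X -> X) (hf : continuous f)
  (hwc : weak_top_contraction f) :
  exists! x : X, f x = x.
Proof.
have uniq : forall x y : X, f x = x -> f y = y -> x = y.
  move=> x y fx fy; apply: contrapT => nxy.
  pose C := [set A : set X | open A /\ ~ (A x /\ A y)].
  have cov : open_cover C.
    split; first by move=> A [].
    apply/seteqP; split => // z _.
    have [->|nzx] := pselect (z = x).
      have [U [V [oU oV Ux Vy UV]]] := sep_helper hX nxy.
      exists U => //; split => // -[_ Uy]; exact: (UV y).
    have [U [V [oU oV Uz Vx UV]]] := sep_helper hX nzx.
    exists U => //; split => // -[Ux _]; exact: (UV x).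
  have [n [A [oA nA] sub]] := hwc C cov x y.
  have itx : forall k, iter k f x = x by elim => //= k ->.
  have ity : forall k, iter k f y = y by elim => //= k ->.
  apply: nA; split.
    by rewrite -(itx n); apply: sub; exists x => //; left.
  by rewrite -(ity n); apply: sub; exists y => //; right.
have [x0 _] := hne.
have ex : exists x, f x = x.
  apply: contrapT => nex.
  pose C := [set A : set X | open A /\ forall z, A z -> ~ A (f z)].
  have cov : open_cover C.
    split; first by move=> A [].
    apply/seteqP; split => // z _.
    have nz : z <> f z by move=> e; apply: nex; exists z.
    have [U [V [oU oV Uz Vfz UV]]] := sep_helper hX nz.
    exists (U `&` f @^-1` V) => //; split.
      apply: openI => //; exact: (proj1 (continuousP f) hf).
    by move=> w [Uw Vfw] [Ufw _]; exact: (UV (f w)).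
  have [n [A [oA nA] sub]] := hwc C cov x0 (f x0).
  have h1 : A (iter n f x0) by apply: sub; exists x0 => //; left.
  have h2 : A (iter n f (f x0)) by apply: sub; exists (f x0) => //; right.
  apply: (nA _ h1); by rewrite -iterS iterSr.
have [x fx] := ex.
exists x; split => // y fy; exact: uniq.
Qed.
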